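(* Let $\Sigma=\{xtyxsy\approx xtxyxsy,\ xtysyx\approx xtysxyx\}$. Let $\mathbf w=\mathbf v_1\mathbf v_2x\mathbf v_3$ where $\mathbf v_1,\mathbf v_2,\mathbf v_3$ are words and $x$ is a letter. If $\mathbf v_1$ contains $x$ and $\mathbf v_2$ contains no letter that is simple in $\mathbf w$, then $\Sigma$ implies the identity $\mathbf w\approx\mathbf v_1x\mathbf v_2x\mathbf v_3$ (i.e., every monoid satisfying $\Sigma$ satisfies it).
   Context: Words are elements of the free monoid over a countably infinite alphabet. A letter is simple in a word if it occurs in it exactly once. *)

(* Defs.v *)
From mathcomp Require Import all_boot.
Set Implicit Arguments. Unset Strict Implicit. Unset Printing Implicit Defensive.

Definition word := seq nat.

Definition simple (a : nat) (w : word) : bool := count_mem a w == 1.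

Definition identity := (word * word)%type.

Record monoid := Monoid {
  carrier :> Type;
  mop : carrier -> carrier -> carrier;
  mone : carrier;
  mopA : forall a b c, mop a (mop b c) = mop (mop a b) c;
  mop1l : forall a, mop mone a = a;
  mop1r : forall a, mop a mone = a }.

Definition eval (M : monoid) (phi : nat -> M) (w : word) : M :=
  foldr (fun a m => mop (phi a) m) (mone M) w.

Definition satisfies (M : monoid) (id : identity) : Prop :=
  forall phi : nat -> M, eval phi id.1 = eval phi id.2.

Definition set_implies (Sigma : seq identity) (id : identity) : Prop :=
  forall M : monoid, (forall s, s \in Sigma -> satisfies M s) -> satisfies M id.

(* Letters x = 0, y = 1, t = 2, s = 3. *)
Definition Sigma33 : seq identity :=
  [:: ([:: 0; 2; 1; 0; 3; 1], [:: 0; 2; 0; 1; 0; 3; 1]);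
      ([:: 0; 2; 1; 3; 1; 0], [:: 0; 2; 1; 3; 0; 1; 0])].

(* Main.v *)
Require Import Defs.
From mathcomp Require Import all_boot.
From mathcomp Require Import zify.

Section S.
Variable M : monoid.
Hypothesis HS : forall s, s \in Sigma33 -> satisfies M s.
Variable phi : nat -> M.
Local Notation ev := (eval phi).

Lemma ev_cat u v : ev (u ++ v) = mop (ev u) (ev v).
Proof.
elim: u => [|a u IH] /=; first by rewrite mop1l.
by rewrite IH mopA.
Qed.

Lemma ctx p q u v : ev u = ev v -> ev (p ++ u ++ q) = ev (p ++ v ++ q).
Proof. by rewrite !ev_cat => ->. Qed.

Definition sub (a b T S : word) (n : nat) : M :=
  match n with 0 => ev a | 1 => ev b | 2 => ev T | _ => ev S end.

Lemma R1w a T b S :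
  ev (a ++ T ++ b ++ a ++ S ++ b) = ev (a ++ T ++ a ++ b ++ a ++ S ++ b).
Proof.
have H := HS ([:: 0; 2; 1; 0; 3; 1], [:: 0; 2; 0; 1; 0; 3; 1])
  (ltac:(by rewrite inE eqxx)) (sub a b T S).
rewrite /= !mop1r in H.
by rewrite !ev_cat.
Qed.

Lemma R2w a T b S :
  ev (a ++ T ++ b ++ S ++ b ++ a) = ev (a ++ T ++ b ++ S ++ a ++ b ++ a).
Proof.
have H := HS ([:: 0; 2; 1; 3; 1; 0], [:: 0; 2; 1; 3; 0; 1; 0])
  (ltac:(by rewrite !inE eqxx orbT)) (sub a b T S).
rewrite /= !mop1r in H.
by rewrite !ev_cat.
Qed.

Lemma R1'w a T S : ev (a ++ T ++ a ++ S) = ev (a ++ T ++ a ++ a ++ S).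
Proof. by have := R1w a T [::] S; rewrite !cats0 !cat0s. Qed.

Variable x : nat.

Lemma step P y B : x \in P -> (y \in P \/ y \in B) ->
  ev (P ++ y :: x :: B) = ev (P ++ x :: y :: x :: B).
Proof.
move=> Hx [Hy|Hy].
  have e1 : ev (P ++ y :: x :: B) = ev (P ++ y :: y :: x :: B).
    case/splitPr: Hy => P1 P2.
    by have := @ctx P1 [::] _ _ (R1'w [:: y] P2 (x :: B)); rewrite !cats0 -!catA /=.
  have e2 : ev (P ++ y :: y :: x :: B) = ev (P ++ y :: x :: y :: x :: B).
    case/splitPr: Hx => Q1 Q2.
    by have := @ctx Q1 B _ _ (R2w [:: x] Q2 [:: y] [::]); rewrite -!catA /=.
  have e3 : ev (P ++ x :: y :: x :: B) = ev (P ++ y :: x :: y :: x :: B).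
    case/splitPr: Hy => P1 P2.
    by have := @ctx P1 B _ _ (R1w [:: y] P2 [:: x] [::]); rewrite -!catA /=.
  by rewrite e1 e2 e3.
case/splitPr: Hx => Q1 Q2.
case/splitPr: Hy => B1 B2.
by have := @ctx Q1 B2 _ _ (R1w [:: x] Q2 [:: y] B1); rewrite -!catA /=.
Qed.

Lemma mainL u : forall P B, x \in P ->
  (forall u1 y u2, u = u1 ++ y :: u2 -> y \in P ++ u1 ++ u2 ++ x :: B) ->
  ev (P ++ u ++ x :: B) = ev (P ++ x :: u ++ x :: B).
Proof.
elim/last_ind: u => [|u y IH] P B Hx Hu.
  case/splitPr: (Hx) => Q1 Q2.
  by have := @ctx Q1 [::] _ _ (R1'w [:: x] Q2 B); rewrite !cats0 -!catA /=.
have Hy : y \in P ++ u ++ x :: B.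
  by have := Hu u y [::] (esym (cats1 u y)).
rewrite -cats1 -!catA /=.
have Hy' : (y \in P ++ u) \/ y \in B.
  move: Hy; rewrite !mem_cat inE.
  case/orP => [->|]; first by left.
  case/orP => [->|]; first by left; rewrite orbT.
  case/orP => [/eqP ->|->]; first by left; rewrite Hx.
  by right.
rewrite catA step; last by []; last by rewrite mem_cat Hx.
rewrite -catA IH //; last first.
  move=> u1 z u2 Hu'.
  have := Hu u1 z (rcons u2 y); rewrite Hu' rcons_cat /= => /(_ erefl).
  rewrite !mem_cat !inE -cats1 !mem_cat !inE.
  by case: (z \in P); case: (z \in u1); case: (z \in u2); case: (z == y); case: (z == x); case: (z \in B).
rewrite (catA P (x :: u)) -step //; first by rewrite -catA.
  by rewrite mem_cat inE eqxx orbT.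
case: Hy' => H; [left|right] => //.
by move: H; rewrite !mem_cat inE => /orP [->|->]; rewrite ?orbT.
Qed.

End S.

Theorem lemma3p3 (v1 v2 v3 : seq nat) (x : nat) :
  x \in v1 ->
  (forall a, a \in v2 -> ~~ simple a (v1 ++ v2 ++ x :: v3)) ->
  set_implies Sigma33 (v1 ++ v2 ++ x :: v3, v1 ++ x :: v2 ++ x :: v3).
Proof.
move=> Hx Hs M HS phi /=.
apply: mainL => // u1 y u2 E.
have := Hs y; rewrite E mem_cat inE eqxx orbT => /(_ erefl).
rewrite /simple !count_cat /= eqxx.
rewrite !mem_cat.
have F : forall s, (count_mem y s != 0) = (y \in s).
  by move=> s; rewrite -has_pred1 has_count lt0n.
move: (F v1) (F u1) (F u2) (F (x :: v3)) => /=.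
case: (y \in v1); case: (y \in u1); case: (y \in u2); case: (y \in x :: v3) => /=; lia.
Qed.
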